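(* Let $X$ be a topological space and $I$ a $Z_B$-ideal of $B_1(X)$. The following are equivalent: (1) $I$ is a prime ideal of $B_1(X)$; (2) $I$ contains a prime ideal of $B_1(X)$; (3) for all $f,g\in B_1(X)$, if $fg=0$ then $f\in I$ or $g\in I$; (4) for every $f\in B_1(X)$ there exists $Z\in Z_B[I]$ such that $f$ does not change sign on $Z$ (i.e. $f\ge 0$ on $Z$ or $f\le0$ on $Z$).
   Context: For a topological space $X$, $B_1(X)$ denotes the commutative ring (with pointwise operations) of all Baire one functions $f:X\to\mathbb{R}$, i.e. pointwise limits of sequences of continuous real-valued functions on $X$. For $f\in B_1(X)$, $Z(f)=\{x\in X: f(x)=0\}$. For an ideal $I$, $Z_B[I]=\{Z(f):f\in I\}$. All ideals are proper. An ideal $I$ of $B_1(X)$ is a $Z_B$-ideal if for all $f\in B_1(X)$: $f\in I \iff Z(f)\in Z_B[I]$. *)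

(* Defs.v *)
From Stdlib Require Import Reals.
Open Scope R_scope.

Record TopSpace := {
  pt :> Type;
  is_open : (pt -> Prop) -> Prop;
  open_full : is_open (fun _ => True);
  open_inter : forall U V, is_open U -> is_open V ->
                 is_open (fun x => U x /\ V x);
  open_union : forall (J : Type) (U : J -> pt -> Prop),
                 (forall j, is_open (U j)) -> is_open (fun x => exists j, U j x)
}.

Definition R_open (U : R -> Prop) : Prop :=
  forall x, U x -> exists eps, 0 < eps /\ forall y, Rabs (y - x) < eps -> U y.

Definition continuous_on (X : TopSpace) (f : X -> R) : Prop :=
  forall U, R_open U -> is_open X (fun x => U (f x)).

Definition Baire1 (X : TopSpace) (f : X -> R) : Prop :=
  exists fn : nat -> X -> R,
    (forall n, continuous_on X (fn n)) /\
    forall x, Un_cv (fun n => fn n x) (f x).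

Definition Zset (X : TopSpace) (f : X -> R) : X -> Prop := fun x => f x = 0.

Definition B1_ideal (X : TopSpace) (I : (X -> R) -> Prop) : Prop :=
  (forall f, I f -> Baire1 X f) /\
  I (fun _ => 0) /\
  (forall f g, I f -> I g -> I (fun x => f x + g x)) /\
  (forall f g, I f -> Baire1 X g -> I (fun x => g x * f x)) /\
  ~ I (fun _ => 1).

Definition B1_prime (X : TopSpace) (P : (X -> R) -> Prop) : Prop :=
  B1_ideal X P /\
  forall f g, Baire1 X f -> Baire1 X g ->
    P (fun x => f x * g x) -> P f \/ P g.

Definition in_ZB (X : TopSpace) (I : (X -> R) -> Prop) (Z : X -> Prop) : Prop :=
  exists g, I g /\ forall x, Zset X g x <-> Z x.

Definition ZB_ideal (X : TopSpace) (I : (X -> R) -> Prop) : Prop :=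
  B1_ideal X I /\
  forall f, Baire1 X f -> (I f <-> in_ZB X I (Zset X f)).

(* Main.v *)
Require Import Defs.
From Stdlib Require Import Reals Lra Lia FunctionalExtensionality PropExtensionality.
Open Scope R_scope.

Definition lip2 (h : R -> R -> R) :=
  forall a b a' b', Rabs (h a b - h a' b') <= Rabs (a - a') + Rabs (b - b').

Lemma ball_open (X : TopSpace) (f : X -> R) a e :
  continuous_on X f -> is_open X (fun x => Rabs (f x - a) < e).
Proof.
  intro Hf. apply (Hf (fun t => Rabs (t - a) < e)). intros t Ht.
  exists (e - Rabs (t-a)). split; [lra|]. intros y Hy.
  pose proof (Rabs_triang (y-t) (t-a)) as H.
  replace (y-t+(t-a)) with (y-a) in H by ring. lra.
Qed.

Lemma cont2 (X : TopSpace) (fn gn : X -> R) h : lip2 h ->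
  continuous_on X fn -> continuous_on X gn ->
  continuous_on X (fun x => h (fn x) (gn x)).
Proof.
  intros Hh Hf Hg U HU.
  set (J := {p : R*R*R | 0 < snd p /\ forall a' b', Rabs (a' - fst (fst p)) < snd p ->
             Rabs (b' - snd (fst p)) < snd p -> U (h a' b')}).
  set (A := fun (j : J) (x : X) =>
        Rabs (fn x - fst (fst (proj1_sig j))) < snd (proj1_sig j) /\
        Rabs (gn x - snd (fst (proj1_sig j))) < snd (proj1_sig j)).
  assert (E : (fun x => U (h (fn x) (gn x))) = (fun x => exists j : J, A j x)).
  { apply functional_extensionality; intro x; apply propositional_extensionality; split.
    - intro Hx. destruct (HU _ Hx) as [eps [He Hb]].
      assert (Pj : 0 < snd (fn x, gn x, eps/2) /\ forall a' b',
         Rabs (a' - fst (fst (fn x, gn x, eps/2))) < snd (fn x, gn x, eps/2) ->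
         Rabs (b' - snd (fst (fn x, gn x, eps/2))) < snd (fn x, gn x, eps/2) -> U (h a' b')).
      { simpl. split; [lra|]. intros a' b' H1 H2. apply Hb.
        pose proof (Hh a' b' (fn x) (gn x)). lra. }
      exists (exist _ (fn x, gn x, eps/2) Pj : J). unfold A; simpl.
      rewrite !Rminus_diag, Rabs_R0. lra.
    - intros [[[[a b] e] [He Hp]] [H1 H2]]; simpl in *. apply Hp; auto. }
  rewrite E. apply open_union. intro j. apply open_inter; apply ball_open; auto.
Qed.

Lemma lim2 (u v : nat -> R) l m h : lip2 h -> Un_cv u l -> Un_cv v m ->
  Un_cv (fun n => h (u n) (v n)) (h l m).
Proof.
  intros Hh Hu Hv eps He.
  destruct (Hu (eps/2)) as [N1 H1]; [lra|].
  destruct (Hv (eps/2)) as [N2 H2]; [lra|].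
  exists (Nat.max N1 N2). intros n Hn. unfold R_dist in *.
  specialize (H1 n ltac:(lia)). specialize (H2 n ltac:(lia)).
  pose proof (Hh (u n) (v n) l m). lra.
Qed.

Lemma baire2 (X : TopSpace) f g h : lip2 h -> Baire1 X f -> Baire1 X g ->
  Baire1 X (fun x => h (f x) (g x)).
Proof.
  intros Hh [fn [Hf1 Hf2]] [gn [Hg1 Hg2]].
  exists (fun n x => h (fn n x) (gn n x)). split.
  - intro n. apply cont2; auto.
  - intro x. apply (lim2 (fun n => fn n x) (fun n => gn n x)); auto.
Qed.

Lemma baire1 (X : TopSpace) f (phi : R -> R) :
  (forall a a', Rabs (phi a - phi a') <= Rabs (a - a')) -> Baire1 X f ->
  Baire1 X (fun x => phi (f x)).
Proof.
  intros Hp Hf. apply (baire2 X f f (fun a _ => phi a)); auto.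
  intros a b a' b'. pose proof (Hp a a'). pose proof (Rabs_pos (b - b')). lra.
Qed.

Lemma key (X : TopSpace) (I : (X -> R) -> Prop) f g Z :
  ZB_ideal X I -> I (fun x => f x * g x) -> in_ZB X I Z ->
  (forall x, Z x -> Rabs (g x) <= Rabs (f x)) -> Baire1 X g -> I g.
Proof.
  intros [[HB [H0 [Hadd [Hmul H1]]]] HZ] Hp [k [Hk HkZ]] Hle Hg.
  set (p := fun x => f x * g x).
  assert (Hu : I (fun x => k x * k x + p x * p x)).
  { apply (Hadd (fun x => k x * k x) (fun x => p x * p x)).
    - apply Hmul; auto.
    - apply Hmul; auto. }
  assert (Hv : I (fun x => g x * (k x * k x + p x * p x))) by (apply Hmul; auto).
  apply (proj2 (HZ g Hg)). exists (fun x => g x * (k x * k x + p x * p x)).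
  split; auto. intro x; unfold Zset; split; intro E.
  - destruct (Rmult_integral _ _ E) as [E1|E1]; auto.
    assert (Ek : k x = 0) by nra. assert (Ep : p x = 0) by nra.
    unfold p in Ep. destruct (Rmult_integral _ _ Ep) as [E2|E2]; auto.
    assert (Zx : Z x) by (apply HkZ; exact Ek).
    specialize (Hle x Zx). rewrite E2, Rabs_R0 in Hle.
    revert Hle. unfold Rabs. destruct (Rcase_abs _); lra.
  - rewrite E; ring.
Qed.

Theorem theorem2p16 (X : TopSpace) (I : (X -> R) -> Prop) :
  ZB_ideal X I ->
  let c1 := B1_prime X I in
  let c2 := exists P, B1_prime X P /\ (forall f, P f -> I f) in
  let c3 := forall f g, Baire1 X f -> Baire1 X g ->
              (forall x, f x * g x = 0) -> I f \/ I g in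
  let c4 := forall f, Baire1 X f ->
              exists Z, in_ZB X I Z /\
                ((forall x, Z x -> 0 <= f x) \/ (forall x, Z x -> f x <= 0)) in
  (c1 <-> c2) /\ (c2 <-> c3) /\ (c3 <-> c4).
Proof.
  intros HI c1 c2 c3 c4.
  assert (i12 : c1 -> c2) by (intro H; exists I; auto).
  assert (i23 : c2 -> c3).
  { intros [P [[[_ [P0 _]] Hpr] HPI]] f g Hf Hg H0.
    assert (E : (fun x => f x * g x) = (fun _ => 0)) by (apply functional_extensionality; auto).
    destruct (Hpr f g Hf Hg) as [|]; [rewrite E; auto | left; auto | right; auto]. }
  assert (i34 : c3 -> c4).
  { intros H3 f Hf.
    assert (Hp : Baire1 X (fun x => Rmax (f x) 0)).
    { apply (baire1 X f (fun t => Rmax t 0)); auto. intros a a'. unfold Rmax, Rabs.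
      repeat (destruct (Rle_dec _ _) || destruct (Rcase_abs _)); lra. }
    assert (Hm : Baire1 X (fun x => Rmin (f x) 0)).
    { apply (baire1 X f (fun t => Rmin t 0)); auto. intros a a'. unfold Rmin, Rabs.
      repeat (destruct (Rle_dec _ _) || destruct (Rcase_abs _)); lra. }
    destruct (H3 _ _ Hp Hm) as [Ip|Im].
    - intro x. unfold Rmax, Rmin. destruct (Rle_dec _ _); ring.
    - exists (Zset X (fun x => Rmax (f x) 0)). split.
      + exists (fun x => Rmax (f x) 0). split; auto. tauto.
      + right. intros x Zx. unfold Zset, Rmax in Zx. destruct (Rle_dec _ _); lra.
    - exists (Zset X (fun x => Rmin (f x) 0)). split.
      + exists (fun x => Rmin (f x) 0). split; auto. tauto.
      + left. intros x Zx. unfold Zset, Rmin in Zx. destruct (Rle_dec _ _); lra. }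
  assert (i41 : c4 -> c1).
  { intro H4. split; [exact (proj1 HI)|]. intros f g Hf Hg Hfg.
    assert (Hh : Baire1 X (fun x => Rabs (f x) - Rabs (g x))).
    { apply (baire2 X f g (fun a b => Rabs a - Rabs b)); auto.
      intros a b a' b'. unfold Rabs.
      repeat destruct (Rcase_abs _); lra. }
    destruct (H4 _ Hh) as [Z [HZ [Hge|Hle]]].
    - right. apply (key X I f g Z HI Hfg HZ); auto.
      intros x Zx. specialize (Hge x Zx). lra.
    - left. apply (key X I g f Z HI); auto.
      + assert (E : (fun x => g x * f x) = (fun x => f x * g x))
          by (apply functional_extensionality; intro; ring).
        rewrite E; auto.
      + intros x Zx. specialize (Hle x Zx). lra. }
  split; [|split]; split; auto.
Qed.
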